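(* Let $R$ be a $*$-ring. The following are equivalent: (1) ${\rm psr}(R)=1$. (2) For any $a,b\in R$ with $aR+bR=R$ there exists a projection $p$ such that $a+bp$ is right invertible. (3) For any $a,b\in R$ with $aR+bR=R$ there exists a projection $p$ such that $a+bp$ is left invertible.
   Context: A $*$-ring is a ring with identity with an involution $*$. A projection is $p$ with $p^2=p=p^*$. ${\rm psr}(R)=1$ means: for any $a,b\in R$ with $aR+bR=R$ there is a projection $p$ such that $a+bp$ is a unit. *)

(* Defs.v *)
From mathcomp Require Import all_boot all_algebra.
Set Implicit Arguments. Unset Strict Implicit. Unset Printing Implicit Defensive.
Import GRing.Theory.
Local Open Scope ring_scope.

Definition is_involution (R : pzRingType) (star : R -> R) : Prop :=
  [/\ forall a b : R, star (a + b) = star a + star b,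
      forall a b : R, star (a * b) = star b * star a
    & forall a : R, star (star a) = a].

Definition is_projection (R : pzRingType) (star : R -> R) (p : R) : Prop :=
  p * p = p /\ p = star p.

Definition right_comaximal (R : pzRingType) (a b : R) : Prop :=
  forall r : R, exists x y : R, a * x + b * y = r.

Definition is_unit_elt (R : pzRingType) (u : R) : Prop :=
  exists v : R, u * v = 1 /\ v * u = 1.
Definition right_invertible (R : pzRingType) (u : R) : Prop :=
  exists v : R, u * v = 1.
Definition left_invertible (R : pzRingType) (u : R) : Prop :=
  exists v : R, v * u = 1.

Definition psr_one (R : pzRingType) (star : R -> R) : Prop :=
  forall a b : R, right_comaximal a b ->
    exists p : R, is_projection star p /\ is_unit_elt (a + b * p).

(* Main.v *)
Require Import Defs.
From mathcomp Require Import all_boot all_algebra.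
Local Open Scope ring_scope.
Import GRing.Theory.

Lemma df_right (R : pzRingType) (star : R -> R) :
  (forall a b : R, right_comaximal a b ->
        exists p : R, is_projection star p /\ right_invertible (a + b * p)) ->
  forall u v : R, u * v = 1 -> v * u = 1.
Proof.
move=> H u v uv.
have cm : right_comaximal v (1 - v * u).
  move=> r; exists (u * r), r.
  by rewrite mulrA mulrBl mul1r addrC subrK.
have [p [_ [w Hw]]] := H _ _ cm.
set c := v + (1 - v * u) * p in Hw.
have uc : u * c = 1.
  by rewrite /c mulrDr uv mulrA mulrBr mulr1 mulrA uv mul1r subrr mul0r addr0.
have wu : w = u by rewrite -[w]mul1r -uc -mulrA Hw mulr1.
have cv : c = v by rewrite -[v]mul1r -Hw wu -mulrA uv mulr1.
by rewrite -cv -{1}wu.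
Qed.

Lemma df_left (R : pzRingType) (star : R -> R) :
  (forall a b : R, right_comaximal a b ->
        exists p : R, is_projection star p /\ left_invertible (a + b * p)) ->
  forall u v : R, v * u = 1 -> u * v = 1.
Proof.
move=> H u v vu.
have cm : right_comaximal v 0.
  by move=> r; exists (u * r), 0; rewrite mulrA vu mul1r mul0r addr0.
have [p [_ [w Hw]]] := H _ _ cm.
rewrite mul0r addr0 in Hw.
have wu : w = u by rewrite -[w]mulr1 -vu mulrA Hw mul1r.
by rewrite -wu.
Qed.

Theorem proposition4p2 (R : pzRingType) (star : R -> R)
  (Hstar : is_involution star) :
  (psr_one star <->
     (forall a b : R, right_comaximal a b ->
        exists p : R, is_projection star p /\ right_invertible (a + b * p))) /\
  (psr_one star <->
     (forall a b : R, right_comaximal a b ->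
        exists p : R, is_projection star p /\ left_invertible (a + b * p))).
Proof.
split; split.
- move=> H a b cm; have [p [pp [v [h1 h2]]]] := H a b cm.
  by exists p; split=> //; exists v.
- move=> H a b cm; have [p [pp [v h1]]] := H a b cm.
  exists p; split=> //; exists v; split=> //.
  exact: (df_right _ _ H _ _ h1).
- move=> H a b cm; have [p [pp [v [h1 h2]]]] := H a b cm.
  by exists p; split=> //; exists v.
- move=> H a b cm; have [p [pp [v h1]]] := H a b cm.
  exists p; split=> //; exists v; split=> //.
  exact: (df_left _ _ H _ _ h1).
Qed.
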